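(* Let $1\le k\le n$, $h=\mathcal D_K(x^{\epsilon_k+\epsilon_{-k}})$, $e=\mathcal D_K(x^{2\epsilon_k+\epsilon_{-k}})$, $d^{(\ell)}=\frac1{\ell!}(\mathrm{ad}\,e)^\ell$. For $a\in\mathbb F$ put $F_a=\sum_{r\ge0}\frac1{r!}h_a^{\langle r\rangle}\otimes e^rt^r\in (U(\mathbf K)\otimes U(\mathbf K))[[t]]$ and $u_a=\sum_{r\ge0}\frac{(-1)^r}{r!}h_{-a}^{[r]}e^rt^r\in U(\mathbf K)[[t]]$. Then for every $\alpha\in\mathbb Z^{2n+1}$, $a\in\mathbb F$ and integer $s\ge1$: $$\big(\mathcal D_K(x^\alpha)^s\otimes1\big)F_a=F_{a+s(\alpha_{-k}-\alpha_k)}\big(\mathcal D_K(x^\alpha)^s\otimes1\big),$$ $$\mathcal D_K(x^\alpha)^s\,u_a=u_{a+s(\alpha_k-\alpha_{-k})}\sum_{\ell\ge0}d^{(\ell)}\big(\mathcal D_K(x^\alpha)^s\big)\,h_{1-a}^{\langle\ell\rangle}t^\ell,$$ $$\big(1\otimes\mathcal D_K(x^\alpha)^s\big)F_a=\sum_{\ell\ge0}(-1)^\ell F_{a+\ell}\big(h_a^{\langle\ell\rangle}\otimes d^{(\ell)}(\mathcal D_K(x^\alpha)^s)\big)t^\ell.$$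
   Context: Let $\mathbb F$ be a field of characteristic $0$ and $n\ge1$. Coordinates are indexed by $\{-n,\dots,-1,0,1,\dots,n\}$; $\epsilon_i\in\mathbb Z^{2n+1}$ is the $i$-th unit vector and, for $\alpha\in\mathbb Z^{2n+1}$, $x^\alpha=\prod_i x_i^{\alpha_i}$ in $\mathbb F[x_{-n}^{\pm1},\dots,x_n^{\pm1}]$. Define the derivation $\mathcal D_K(x^\alpha)=\big(2-\sum_{i=1}^n(\alpha_i+\alpha_{-i})\big)x^\alpha\frac{\partial}{\partial x_0}+\sum_{i=1}^n\Big[(\alpha_0x^{\alpha+\epsilon_i-\epsilon_0}+\alpha_{-i}x^{\alpha-\epsilon_{-i}})\frac{\partial}{\partial x_i}+(\alpha_0x^{\alpha+\epsilon_{-i}-\epsilon_0}-\alpha_ix^{\alpha-\epsilon_i})\frac{\partial}{\partial x_{-i}}\Big]$, extended linearly. The generalized Cartan type $K$ Lie algebra $\mathbf K$ is the Lie algebra of derivations (commutator bracket) with basis $\{\mathcal D_K(x^\alpha):\alpha\in\mathbb Z^{2n+1}\}$; explicitly $[\mathcal D_K(x^\alpha),\mathcal D_K(x^\beta)]=\mathcal D_K\Big(\big((2-\sum_{i=1}^n(\alpha_i+\alpha_{-i}))\beta_0-(2-\sum_{i=1}^n(\beta_i+\beta_{-i}))\alpha_0\big)x^{\alpha+\beta-\epsilon_0}+\sum_{i=1}^n(\alpha_{-i}\beta_i-\alpha_i\beta_{-i})x^{\alpha+\beta-\epsilon_i-\epsilon_{-i}}\Big)$. For an element $x$ of a unital algebra,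 a scalar $a$ and $m\ge0$: $x_a^{\langle m\rangle}=(x+a)(x+a+1)\cdots(x+a+m-1)$, $x_a^{[m]}=(x+a)(x+a-1)\cdots(x+a-m+1)$, $x^{\langle m\rangle}=x_0^{\langle m\rangle}$ (empty products $=1$). $\mathrm{ad}\,e(y)=ey-ye$. *)

(* Defs.v *)
From HB Require Import structures.
From mathcomp Require Import all_boot all_order all_algebra.
Set Implicit Arguments. Unset Strict Implicit. Unset Printing Implicit Defensive.
Import Order.TTheory GRing.Theory Num.Theory.
Local Open Scope ring_scope.

(* Coordinate indices {-n,...,-1,0,1,...,n}:
   None            <-> 0
   Some (i, true)  <-> i+1      (i : 'I_n)
   Some (i, false) <-> -(i+1)   *)
Definition idx (n : nat) := option ('I_n * bool).
Definition i0 {n : nat} : idx n := None.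
Definition ip {n : nat} (i : 'I_n) : idx n := Some (i, true).
Definition im {n : nat} (i : 'I_n) : idx n := Some (i, false).

Definition expo (n : nat) := {ffun idx n -> int}.
Definition eps {n : nat} (j : idx n) : expo n := [ffun l => ((l == j) : nat)%:Z].

Definition degK {n : nat} (al : expo n) : int :=
  2 - \sum_(i < n) (al (ip i) + al (im i)).

(* A linear map from K (basis D_K(x^alpha)) into an associative unital
   F-algebra R, given by its values f alpha on the basis, is a Lie algebra
   homomorphism iff it respects the bracket on basis elements. *)
Definition lie_hom {F : fieldType} {R : algType F} {n : nat}
    (f : expo n -> R) : Prop :=
  forall al be : expo n,
    f al * f be - f be * f al =
      ((degK al * be i0 - degK be * al i0)%:~R : F) *: f (al + be - eps i0)
    + \sum_(i < n) ((al (im i) * be (ip i) - al (ip i) * be (im i))%:~R : F)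
                   *: f (al + be - eps (ip i) - eps (im i)).

Definition rising {F : fieldType} {R : algType F} (x : R) (a : F) (m : nat) : R :=
  \prod_(j < m) (x + (a + j%:R)%:A).
Definition falling {F : fieldType} {R : algType F} (x : R) (a : F) (m : nat) : R :=
  \prod_(j < m) (x + (a - j%:R)%:A).

Definition ad {R : ringType} (e y : R) : R := e * y - y * e.
Definition dpow {F : fieldType} {R : algType F} (e : R) (l : nat) (y : R) : R :=
  ((l`!%:R : F)^-1) *: iter l (ad e) y.

(* Formal power series in a central variable t, as coefficient sequences. *)
Definition ser (R : Type) := nat -> R.
Definition serC {R : ringType} (c : R) : ser R := fun N => if N == 0%N then c else 0.
Definition sermul {R : ringType} (p q : ser R) : ser R :=
  fun N => \sum_(i < N.+1) p i * q (N - i)%N.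

(* F_a = sum_r (1/r!) h_a^<r> (x) e^r t^r, where x (x) y is realised as
   phi1 x * phi2 y; here h1 = phi1 h, e2 = phi2 e. *)
Definition Fser {F : fieldType} {R : algType F} (h1 e2 : R) (a : F) : ser R :=
  fun r => ((r`!%:R : F)^-1) *: (rising h1 a r * e2 ^+ r).
Definition user {F : fieldType} {R : algType F} (h e : R) (a : F) : ser R :=
  fun r => ((-1) ^+ r / (r`!%:R : F)) *: (falling h (- a) r * e ^+ r).

(* Main.v *)
Require Import Defs.
From HB Require Import structures.
From mathcomp Require Import all_boot all_order all_algebra ring.
Import Order.TTheory GRing.Theory Num.Theory.
Local Open Scope ring_scope.
Set Implicit Arguments. Unset Strict Implicit. Unset Printing Implicit Defensive.

Section Gen.
Variables (F : fieldType) (R : algType F).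
Implicit Types (z w h e y : R) (c d b : F).

Definition sh z h c := z * h = h * z - c *: z.

Lemma sh_ad e z h c : sh e h 1 -> sh z h c -> sh (ad e z) h (c + 1).
Proof.
rewrite /sh /ad => He Hz.
rewrite mulrBl -!mulrA Hz He !mulrBr !mulrA He Hz.
rewrite !scale1r -scalerAr !mulrBl -scalerAl scalerDl scale1r scalerBr.
set A := h * e * z; set B := h * z * e.
set P := e * z; set Q := z * e.
rewrite !opprB !opprD !addrA.
rewrite !opprK !(addrAC _ (- B)); congr (_ - B).
rewrite -!addrA; congr (_ + _); rewrite addrCA; congr (_ + _); rewrite [RHS]addrCA (addrC Q).
done.
Qed.


Lemma sh_mul z w h c d : sh z h c -> sh w h d -> sh (z * w) h (c + d).
Proof.
rewrite /sh => Hz Hw.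
rewrite -mulrA Hw mulrBr [z * (h * w)]mulrA Hz mulrBl -scalerAr -scalerAl.
by rewrite scalerDl opprD addrA mulrA.
Qed.

Lemma sh_exp z h c s : sh z h c -> sh (z ^+ s) h (s%:R * c).
Proof.
move=> Hz; elim: s => [|s IH].
  by rewrite /sh expr0 mul0r scale0r subr0 mulr1 mul1r.
by rewrite exprSr -[s.+1]addn1 natrD mulrDl mul1r; apply: sh_mul.
Qed.

Lemma sh_iter e z h c l : sh e h 1 -> sh z h c -> sh (iter l (ad e) z) h (c + l%:R).
Proof.
move=> He Hz; elim: l => [|l IH] /=; first by rewrite addr0.
by rewrite -[l.+1]addn1 natrD addrA; apply: sh_ad.
Qed.

Lemma sh_lin z h c b : sh z h c -> z * (h + b%:A) = (h + (b - c)%:A) * z.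
Proof.
rewrite /sh => Hz.
rewrite mulrDr Hz mulrDl mulr_algr mulr_algl scalerBl.
by rewrite -addrA [- _ + _]addrC.
Qed.

Lemma sh_prod z h c r (f : nat -> F) : sh z h c ->
  z * \prod_(j < r) (h + (f j)%:A) = \prod_(j < r) (h + (f j - c)%:A) * z.
Proof.
move=> Hz; elim: r => [|r IH]; first by rewrite !big_ord0 mulr1 mul1r.
by rewrite !big_ord_recr /= mulrA IH -!mulrA (sh_lin _ Hz).
Qed.

Lemma sh_rising z h c b r : sh z h c -> z * rising h b r = rising h (b - c) r * z.
Proof.
move=> Hz; rewrite /rising (sh_prod r (fun j => b + j%:R) Hz).
by congr (_ * _); apply: eq_bigr => j _; rewrite addrAC.
Qed.

Lemma sh_falling z h c b r : sh z h c -> z * falling h b r = falling h (b - c) r * z.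
Proof.
move=> Hz; rewrite /falling (sh_prod r (fun j => b - j%:R) Hz).
by congr (_ * _); apply: eq_bigr => j _; rewrite addrAC.
Qed.

Lemma comm_lin h (u v : F) : GRing.comm (h + u%:A) (h + v%:A).
Proof.
rewrite /GRing.comm !mulrDl !mulrDr !mulr_algl !mulr_algr !scalerA mulrC -!addrA; congr (_ + _).
by rewrite addrCA; congr (_ + _); rewrite addrC.
Qed.

Lemma comm_rising_lin h (a : F) l (u : F) : GRing.comm (h + u%:A) (rising h a l).
Proof. by apply: commr_prod => j _; apply: comm_lin. Qed.

Lemma rising_split h b l m : rising h b (l + m) = rising h b l * rising h (b + l%:R) m.
Proof.
elim: m => [|m IH]; first by rewrite addn0 /rising big_ord0 mulr1.
rewrite addnS /rising big_ord_recr /= -/(rising h b (l + m)) IH.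
by rewrite [in RHS]big_ord_recr /= mulrA natrD addrA.
Qed.

Lemma falling_split h b l m : falling h b (l + m) = falling h b l * falling h (b - l%:R) m.
Proof.
elim: m => [|m IH]; first by rewrite addn0 /falling big_ord0 mulr1.
rewrite addnS /falling big_ord_recr /= -/(falling h b (l + m)) IH.
by rewrite [in RHS]big_ord_recr /= mulrA natrD opprD addrA.
Qed.

Lemma rising_rev h c l : rising h c l = falling h (c + l%:R - 1) l.
Proof.
elim: l c => [|l IH] c; first by rewrite /rising /falling !big_ord0.
rewrite /rising big_ord_recr /= -/(rising h c l) IH.
rewrite /falling big_ord_recl /= -/(falling h _ l).
have -> : \prod_(i < l) (h + (c + l.+1%:R - 1 - (lift ord0 i)%:R)%:A)
          = falling h (c + l%:R - 1) l.
  by apply: eq_bigr => i _; rewrite lift0 -addn1 !natrD; congr (_ + _%:A); ring.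
rewrite -IH subr0; have -> : c + l.+1%:R - 1 = c + l%:R by rewrite -addn1 natrD; ring.
by rewrite (comm_rising_lin h c l (c + l%:R)).
Qed.

Lemma ad_pow y e N : y * e ^+ N =
  \sum_(l < N.+1) (((-1) ^+ l * ('C(N, l))%:R : F) *: (e ^+ (N - l) * iter l (ad e) y)).
Proof.
elim: N => [|N IH].
  by rewrite big_ord_recl big_ord0 /= !expr0 mulr1 mul1r scale1r addr0 mul1r.
rewrite exprSr mulrA IH mulr_suml.
have E : forall l : 'I_N.+1,
   (((-1) ^+ l * ('C(N, l))%:R : F) *: (e ^+ (N - l) * iter l (ad e) y)) * e
   = (((-1) ^+ l * ('C(N, l))%:R : F) *: (e ^+ (N - l) * e * iter l (ad e) y))
     - (((-1) ^+ l * ('C(N, l))%:R : F) *: (e ^+ (N - l) * iter l.+1 (ad e) y)).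
  move=> l; rewrite -scalerAl -scalerBr -!mulrA -mulrBr /=; congr (_ *: (_ * _)).
  by rewrite /ad opprB addrC subrK.
rewrite (eq_bigr _ (fun l _ => E l)) sumrB.
rewrite [in RHS]big_ord_recl [in RHS]big_ord_recr /=.
rewrite [X in X - _]big_ord_recl [X in _ - X]big_ord_recr /=.
have B0 : forall i, bump 0 i = i.+1 by [].
rewrite !B0 !add0n !subn0 !bin0 !expr0 !mul1r -exprSr !subnn !binn.
rewrite -addrA; congr (_ + _); rewrite opprD addrA -sumrB; congr (_ + _); last first.
  by rewrite !mulr1 exprS mulN1r scaleNr.
apply: eq_bigr => i _; rewrite !B0 add0n -exprSr subnSK // subSS -scalerBl.
by congr (_ *: _); rewrite binS natrD exprS; ring.
Qed.

Lemma sermulCl (c : R) p M : sermul (serC c) p M = c * p M.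
Proof.
rewrite /sermul big_ord_recl /= subn0 big1 ?addr0 // => i _.
by rewrite /serC mul0r.
Qed.

Lemma sermulCr (c : R) p M : sermul p (serC c) M = p M * c.
Proof.
rewrite /sermul big_ord_recr /= subnn big1 ?add0r // => i _.
by rewrite /serC subn_eq0 leqNgt ltn_ord mulr0.
Qed.
End Gen.

Section Hom.
Variables (F : fieldType) (R : algType F) (n : nat) (k : 'I_n).

Lemma someE (i j : 'I_n) (b c : bool) :
  (Some (i, b) == Some (j, c)) = (i == j) && (b == c).
Proof. by []. Qed.

Lemma NoneE (i : 'I_n) (b : bool) : (Some (i, b) == None :> option (_ * bool)) = false.
Proof. by []. Qed.

Lemma hexp_ip (i : 'I_n) : (eps (ip k) + eps (im k)) (ip i) = ((i == k) : nat)%:Z.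
Proof. by rewrite !ffunE /ip /im !someE; case: (i == k). Qed.
Lemma hexp_im (i : 'I_n) : (eps (ip k) + eps (im k)) (im i) = ((i == k) : nat)%:Z.
Proof. by rewrite !ffunE /ip /im !someE; case: (i == k). Qed.
Lemma hexp_i0 : (eps (ip k) + eps (im k)) i0 = 0.
Proof. by rewrite !ffunE /i0 /ip /im. Qed.
Lemma eexp_ip : (eps (ip k) + eps (ip k) + eps (im k)) (ip k) = 2.
Proof. by rewrite !ffunE /ip /im !someE /= eqxx. Qed.
Lemma eexp_im : (eps (ip k) + eps (ip k) + eps (im k)) (im k) = 1.
Proof. by rewrite !ffunE /ip /im !someE /= eqxx. Qed.

Lemma degK_hexp : degK (eps (ip k) + eps (im k)) = 0.
Proof.
rewrite /degK (bigD1 k) //= hexp_ip hexp_im eqxx big1 ?addr0 // => i ne.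
by rewrite hexp_ip hexp_im (negbTE ne).
Qed.

Lemma hom_h (phi : expo n -> R) (be : expo n) : lie_hom phi ->
  phi (eps (ip k) + eps (im k)) * phi be - phi be * phi (eps (ip k) + eps (im k))
  = ((be (ip k) - be (im k))%:~R : F) *: phi be.
Proof.
move=> hom; rewrite hom degK_hexp hexp_i0 mul0r mulr0 subr0 scale0r add0r.
rewrite (bigD1 k) //= big1 ?addr0; last first.
  by move=> i ne; rewrite hexp_ip hexp_im (negbTE ne) !mul0r subrr scale0r.
rewrite hexp_ip hexp_im eqxx !mul1r; congr (_ *: phi _).
by apply/ffunP => j; rewrite !ffunE; ring.
Qed.
End Hom.

Lemma comm_risings (F : fieldType) (R : algType F) (h : R) (a b : F) l j :
  GRing.comm (rising h a l) (rising h b j).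
Proof.
rewrite {2}/rising; apply: commr_prod => i _; apply: commr_sym; exact: comm_rising_lin.
Qed.

Lemma sgnA (F : fieldType) (R : algType F) l (z : R) :
  (-1) ^+ l * z = ((-1) ^+ l : F) *: z.
Proof.
elim: l => [|l IH]; first by rewrite !expr0 mul1r scale1r.
by rewrite exprS -mulrA IH mulN1r exprS -scalerA scaleN1r.
Qed.

Unset Implicit Arguments.
Theorem lemma3p3
  (F : fieldType) (charF0 : [pchar F] =i pred0)
  (n : nat) (k : 'I_n)   (* k : 'I_n stands for the index k+1 in {1..n} *)
  (R : algType F) (phi1 phi2 : expo n -> R)
  (hom1 : lie_hom phi1) (hom2 : lie_hom phi2)
  (comm12 : forall al be : expo n, phi1 al * phi2 be = phi2 be * phi1 al)
  (al : expo n) (a : F) (s : nat) (hs : (0 < s)%N) :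
  let hexp := eps (ip k) + eps (im k) in
  let eexp := eps (ip k) + eps (ip k) + eps (im k) in
  let h1 := phi1 hexp in let e1 := phi1 eexp in let e2 := phi2 eexp in
  let X1 := phi1 al ^+ s in let X2 := phi2 al ^+ s in
  (forall N : nat,
     sermul (serC X1) (Fser h1 e2 a) N
     = sermul (Fser h1 e2 (a + s%:R * ((al (im k))%:~R - (al (ip k))%:~R)))
              (serC X1) N)
  /\
  (forall N : nat,
     X1 * user h1 e1 a N
     = sermul (user h1 e1 (a + s%:R * ((al (ip k))%:~R - (al (im k))%:~R)))
              (fun l => dpow e1 l X1 * rising h1 (1 - a) l) N)
  /\
  (forall N : nat,
     X2 * Fser h1 e2 a N
     = \sum_(l < N.+1)
         (-1) ^+ l * sermul (Fser h1 e2 (a + l%:R))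
                            (serC (rising h1 a l * dpow e2 l X2)) (N - l)%N).
Proof.
move=> hexp eexp h1 e1 e2 X1 X2.
have fact0 : forall m, (m`!%:R : F) != 0.
  by move=> m; rewrite ((pcharf0P F).1 charF0) -lt0n fact_gt0.
set c : F := (al (ip k))%:~R - (al (im k))%:~R.
have shx : sh (phi1 al) h1 c.
  have H := hom_h k al hom1; rewrite intrB -/hexp -/h1 in H.
  by rewrite /sh -H opprB addrC subrK.
have shX1 : sh X1 h1 (s%:R * c) by apply: sh_exp.
have she1 : sh e1 h1 1.
  have H := hom_h k eexp hom1; rewrite -/hexp -/h1 -/e1 eexp_ip eexp_im in H.
  by rewrite /sh -H opprB addrC subrK.
have cX2 : GRing.comm X2 h1 by apply/commr_sym/commrX; rewrite /GRing.comm comm12.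
have shX2 : sh X2 h1 0 by rewrite /sh scale0r subr0 cX2.
have she2 : sh e2 h1 0 by rewrite /sh scale0r subr0 -comm12.
split; [|split].
- move=> N; rewrite sermulCl sermulCr /Fser -scalerAr -scalerAl; congr (_ *: _).
  rewrite mulrA (sh_rising _ _ shX1) -!mulrA; congr (rising _ _ _ * _).
    by rewrite /c; ring.
  by apply: commrX; apply: commr_sym; apply: commrX; rewrite /GRing.comm comm12.
- move=> N; rewrite /user -scalerAr mulrA (sh_falling _ _ shX1) -mulrA ad_pow.
  rewrite mulr_sumr scaler_sumr /sermul (reindex_inj rev_ord_inj) /=.
  apply: eq_bigr => i _; rewrite subSS.
  have Hi : (i <= N)%N by rewrite -ltnS ltn_ord.
  rewrite subKn //.
  move: (nat_of_ord i) Hi => j Hj; move: (N - j)%N (subnKC Hj) => l HN.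
  subst N.
  rewrite /dpow -!scalerAl -!scalerAr !scalerA; congr (_ *: _).
    have HC := bin_fact (leq_addl j l); rewrite addnK in HC.
    have HC' : ('C(j + l, l)%:R : F) = (j + l)`!%:R / (l`!%:R * j`!%:R).
      by rewrite -HC natrM natrM mulfK // mulf_neq0.
    rewrite HC' exprD.
    have S : ((-1) ^+ l * (-1) ^+ l : F) = 1.
      by rewrite -exprMn mulrNN mulr1 expr1n.
    rewrite -[X in _ = X]mul1r -[1 in X in _ = X * _]S; field.
    by rewrite !fact0 /= ?mulf_neq0.
  have E1 := sh_rising (1 - a) l (sh_iter l she1 shX1).
  have E2 := sh_rising (1 - a - (s%:R * c + l%:R)) l (sh_exp j she1).
  rewrite E1 [in RHS]mulrA -[in RHS](mulrA _ (e1 ^+ j)) E2 rising_rev falling_split.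
  have -> : 1 - a - (s%:R * c + l%:R) - j%:R * 1 + l%:R - 1 = - a - s%:R * c - j%:R.
    by ring.
  by rewrite opprD !mulrA.
- move=> N; rewrite /Fser -scalerAr mulrA (sh_rising _ _ shX2) subr0 -mulrA ad_pow.
  rewrite mulr_sumr scaler_sumr; apply: eq_bigr => i _.
  rewrite sermulCr sgnA.
  have Hi : (i <= N)%N by rewrite -ltnS ltn_ord.
  move: (nat_of_ord i) Hi => l Hl; move: (N - l)%N (subnKC Hl) => j HN.
  subst N.
  rewrite /dpow -!scalerAl -!scalerAr !scalerA; congr (_ *: _).
    have HC := bin_fact (leq_addr j l); rewrite addKn in HC.
    have HC' : ('C(l + j, l)%:R : F) = (l + j)`!%:R / (l`!%:R * j`!%:R).
      by rewrite -HC natrM natrM mulfK // mulf_neq0.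
    rewrite HC'; field.
    by rewrite !fact0 /= ?mulf_neq0.
  have E2 := sh_rising a l (sh_exp j she2); rewrite mulr0 subr0 in E2.
  rewrite rising_split [in RHS]mulrA -[in RHS](mulrA _ (e2 ^+ j)) E2.
  by rewrite !mulrA (comm_risings h1 (a + l%:R) a j l).
Qed.
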